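(* There exists a unique $\mu_{\mathrm{cr}}>0$ such that: (a) the problem $(\dot w_p/H_p^3)_p-\mu\rho_p\dot w=0$ on $(-1,0)$, $\dot w(-1)=0$, $-\dot w_p(0)/H_p(0)^3+\mu\rho(0)\dot w(0)=0$ has a nontrivial solution $\dot w$ for $\mu=\mu_{\mathrm{cr}}$, and one can take $\dot w=\Phi(\cdot;\mu_{\mathrm{cr}})$; (b) if $0\le\mu\le\mu_{\mathrm{cr}}$, then $\Phi(p;\mu)>0$ for $-1<p\le0$ and $\Phi_p(p;\mu)>0$ for $-1\le p\le0$; (c) for $0\le\mu<\mu_{\mathrm{cr}}$, $A(\mu)<0$.
   Context: Fix $\alpha\in(0,1)$, $\rho\in C^{2+\alpha}([-1,0])$ with $\rho>0$ and $\rho_p\le0$, and $H\in C^{3+\alpha}([-1,0])$ with $H_p>0$. For $\mu\ge0$, $\Phi(\cdot;\mu)$ denotes the solution of the initial value problem $(\Phi_p/H_p^3)_p-\mu\rho_p\Phi=0$ on $(-1,0)$, $\Phi(-1)=0$, $\Phi_p(-1)=1$, and $A(\mu):=-\Phi_p(0;\mu)/H_p(0)^3+\mu\rho(0)\Phi(0;\mu)$. *)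

(* Defs.v *)
From Stdlib Require Import Reals Lra.
Open Scope R_scope.

Definition deriv_within (a b : R) (f : R -> R) (x l : R) : Prop :=
  forall eps, 0 < eps -> exists delta, 0 < delta /\
    forall y, a <= y <= b -> y <> x -> Rabs (y - x) < delta ->
      Rabs ((f y - f x) / (y - x) - l) < eps.

Definition deriv_at (f : R -> R) (x l : R) : Prop :=
  forall eps, 0 < eps -> exists delta, 0 < delta /\
    forall y, y <> x -> Rabs (y - x) < delta ->
      Rabs ((f y - f x) / (y - x) - l) < eps.

Definition holder_on (a b alpha : R) (g : R -> R) : Prop :=
  exists C, 0 <= C /\ forall x y, a <= x <= b -> a <= y <= b -> x <> y ->
    Rabs (g x - g y) <= C * Rpower (Rabs (x - y)) alpha.

Definition Ckalpha (k : nat) (alpha a b : R) (f : R -> R) : Prop :=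
  exists fs : nat -> R -> R,
    (forall x, a <= x <= b -> fs 0%nat x = f x) /\
    (forall j x, (j < k)%nat -> a <= x <= b ->
        deriv_within a b (fs j) x (fs (S j) x)) /\
    holder_on a b alpha (fs k).

Definition ode_sol (Hp rhop : R -> R) (mu : R) (w wp : R -> R) : Prop :=
  (forall p, -1 <= p <= 0 -> deriv_within (-1) 0 w p (wp p)) /\
  (forall p, -1 <= p <= 0 ->
     forall eps, 0 < eps -> exists delta, 0 < delta /\
       forall x, -1 <= x <= 0 -> Rabs (x - p) < delta -> Rabs (wp x - wp p) < eps) /\
  (forall p, -1 < p < 0 ->
     deriv_at (fun q => wp q / (Hp q ^ 3)) p (mu * rhop p * w p)).

Definition bvp_sol (rho Hp rhop : R -> R) (mu : R) (w wp : R -> R) : Prop :=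
  ode_sol Hp rhop mu w wp /\ w (-1) = 0 /\
  - wp 0 / (Hp 0 ^ 3) + mu * rho 0 * w 0 = 0.

Definition nontrivial (w : R -> R) : Prop := exists p, -1 <= p <= 0 /\ w p <> 0.

Definition Afun (rho Hp : R -> R) (Phi Phip : R -> R -> R) (mu : R) : R :=
  - Phip 0 mu / (Hp 0 ^ 3) + mu * rho 0 * Phi 0 mu.

(* Main.v *)
Require Import Defs.
From Stdlib Require Import Reals Lra Psatz Lia Classical.
From Coquelicot Require Import Coquelicot.
Open Scope R_scope.

Definition clamp (x:R) := Rmin 0 (Rmax (-1) x).
Lemma clamp_in x : -1 <= clamp x <= 0.
Proof. unfold clamp, Rmin, Rmax; repeat destruct Rle_dec; lra. Qed.
Lemma clamp_id x : -1 <= x <= 0 -> clamp x = x.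
Proof. intros; unfold clamp, Rmin, Rmax; repeat destruct Rle_dec; lra. Qed.
Lemma clamp_lip x y : Rabs (clamp x - clamp y) <= Rabs (x - y).
Proof. unfold clamp, Rmin, Rmax; repeat destruct Rle_dec; unfold Rabs; repeat destruct Rcase_abs; lra. Qed.

Definition cw (f : R -> R) (x : R) := forall eps, 0 < eps -> exists delta, 0 < delta /\
  forall y, -1 <= y <= 0 -> Rabs (y - x) < delta -> Rabs (f y - f x) < eps.

Lemma cw_clamp f : (forall x, -1 <= x <= 0 -> cw f x) -> forall x, continuity_pt (fun y => f (clamp y)) x.
Proof.
  intros Hf x. unfold continuity_pt, continue_in, limit1_in, limit_in. simpl. unfold R_dist.
  intros eps Heps. destruct (Hf (clamp x) (clamp_in x) eps Heps) as [d [Hd Hy]].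
  exists d; split; auto. intros y [_ Hyx].
  apply Hy. apply clamp_in. eapply Rle_lt_trans. apply clamp_lip. exact Hyx.
Qed.

Lemma cp_epsdelta g x : continuity_pt g x -> forall eps, 0 < eps -> exists d, 0 < d /\
  forall y, Rabs (y - x) < d -> Rabs (g y - g x) < eps.
Proof.
  intros Hc eps Heps. unfold continuity_pt, continue_in, limit1_in, limit_in in Hc. simpl in Hc.
  unfold R_dist in Hc. destruct (Hc eps Heps) as [d [Hd H]]. exists d; split; auto.
  intros y Hy. destruct (Req_dec y x) as [->|Hne].
  - rewrite Rminus_eq_0, Rabs_R0; auto.
  - apply H. split; auto. unfold D_x, no_cond. split; auto.
Qed.

Lemma cw_id x : cw (fun z => z) x.
Proof. intros eps He. exists eps; split; auto. Qed.

Lemma cp_clamp x : continuity_pt clamp x.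
Proof. exact (cw_clamp (fun z => z) (fun x _ => cw_id x) x). Qed.

Lemma dw_cw f x l : -1 <= x <= 0 -> deriv_within (-1) 0 f x l -> cw f x.
Proof.
  intros Hx Hd eps Heps.
  destruct (Hd 1 Rlt_0_1) as [d [Hd0 Hdy]].
  assert (HL : 0 < Rabs l + 1) by (pose proof (Rabs_pos l); lra).
  exists (Rmin d (eps / (Rabs l + 1))). split.
  { apply Rmin_pos; auto. apply Rdiv_lt_0_compat; auto. }
  intros y Hy Hyx.
  destruct (Req_dec y x) as [->|Hne]. { rewrite Rminus_eq_0, Rabs_R0; auto. }
  assert (Hq := Hdy y Hy Hne (Rlt_le_trans _ _ _ Hyx (Rmin_l _ _))).
  assert (Hyx2 := Rlt_le_trans _ _ _ Hyx (Rmin_r _ _)).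
  assert (Hne' : y - x <> 0) by lra.
  replace (f y - f x) with ((f y - f x)/(y-x) * (y-x)) by (field; auto).
  rewrite Rabs_mult. set (q := (f y - f x)/(y-x)) in *.
  assert (Hq2 : Rabs q < Rabs l + 1).
  { replace q with ((q - l) + l) by ring. pose proof (Rabs_triang (q-l) l). lra. }
  assert (Hb : 0 < Rabs (y - x)) by (apply Rabs_pos_lt; auto).
  assert (HE : (Rabs l + 1) * (eps / (Rabs l + 1)) = eps) by (field; lra).
  pose proof (Rabs_pos q). nra.
Qed.

Lemma dw_interior f x l : -1 < x < 0 -> deriv_within (-1) 0 f x l -> derivable_pt_lim f x l.
Proof.
  intros Hx Hd eps Heps. destruct (Hd eps Heps) as [d [Hd0 H]].
  assert (Hp : 0 < Rmin d (Rmin (x+1) (-x))) by (repeat apply Rmin_pos; lra).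
  exists (mkposreal _ Hp). intros h Hh0 Hh. simpl in Hh.
  pose proof (Rlt_le_trans _ _ _ Hh (Rmin_l _ _)) as H1.
  pose proof (Rlt_le_trans _ _ _ Hh (Rmin_r _ _)) as H2.
  pose proof (Rlt_le_trans _ _ _ H2 (Rmin_l _ _)) as H3.
  pose proof (Rlt_le_trans _ _ _ H2 (Rmin_r _ _)) as H4.
  specialize (H (x+h)). replace (x + h - x) with h in H by ring. apply H; auto.
  - unfold Rabs in *; destruct Rcase_abs; lra.
  - lra.
Qed.

Lemma da_derive f x l : deriv_at f x l -> derivable_pt_lim f x l.
Proof.
  intros Hd eps Heps. destruct (Hd eps Heps) as [d [Hd0 H]].
  exists (mkposreal _ Hd0). intros h Hh0 Hh. simpl in Hh.
  specialize (H (x+h)). replace (x + h - x) with h in H by ring. apply H; auto. lra.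
Qed.

Lemma dw_unique f x l1 l2 : -1 <= x <= 0 -> deriv_within (-1) 0 f x l1 ->
  deriv_within (-1) 0 f x l2 -> l1 = l2.
Proof.
  intros Hx H1 H2. destruct (Req_dec l1 l2) as [|Hne]; auto. exfalso.
  assert (He : 0 < Rabs (l1 - l2) / 2) by (assert (l1 - l2 <> 0) by lra; pose proof (Rabs_pos_lt _ H); lra).
  destruct (H1 _ He) as [d1 [Hd1 K1]]. destruct (H2 _ He) as [d2 [Hd2 K2]].
  set (t := Rmin (Rmin d1 d2) 1 / 2).
  assert (Ht : 0 < t) by (unfold t; assert (0 < Rmin (Rmin d1 d2) 1) by (repeat apply Rmin_pos; lra); lra).
  assert (Ht1 : t < d1).
  { unfold t. pose proof (Rmin_l (Rmin d1 d2) 1). pose proof (Rmin_l d1 d2). lra. }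
  assert (Ht2 : t < d2).
  { unfold t. pose proof (Rmin_l (Rmin d1 d2) 1). pose proof (Rmin_r d1 d2). lra. }
  assert (Ht3 : t <= 1/2).
  { unfold t. pose proof (Rmin_r (Rmin d1 d2) 1). lra. }
  assert (exists y, -1 <= y <= 0 /\ y <> x /\ Rabs (y - x) = t) as [y [Hy [Hyx Hyt]]].
  { destruct (Rle_dec x (-1/2)).
    - exists (x + t). split; [lra|split;[lra|]]. replace (x+t-x) with t by ring. apply Rabs_right; lra.
    - exists (x - t). split; [lra|split;[lra|]]. replace (x-t-x) with (-t) by ring.
      rewrite Rabs_Ropp. apply Rabs_right; lra. }
  specialize (K1 y Hy Hyx). specialize (K2 y Hy Hyx). rewrite Hyt in K1, K2.
  specialize (K1 Ht1). specialize (K2 Ht2).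
  set (q := (f y - f x) / (y - x)) in *.
  revert K1 K2. unfold Rabs; repeat destruct Rcase_abs; lra.
Qed.

Lemma dw_ext f g x l : (forall y, -1 <= y <= 0 -> f y = g y) -> -1 <= x <= 0 ->
  deriv_within (-1) 0 f x l -> deriv_within (-1) 0 g x l.
Proof.
  intros E Hx H eps He. destruct (H eps He) as [d [Hd K]]. exists d; split; auto.
  intros y Hy Hyx Hd'. rewrite <- (E y Hy), <- (E x Hx). auto.
Qed.

Lemma cw_ext f g x : (forall y, -1 <= y <= 0 -> f y = g y) -> -1 <= x <= 0 -> cw f x -> cw g x.
Proof.
  intros E Hx H eps He. destruct (H eps He) as [d [Hd K]]. exists d; split; auto.
  intros y Hy Hd'. rewrite <- (E y Hy), <- (E x Hx). auto.
Qed.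

Lemma cp_mult f g x : continuity_pt f x -> continuity_pt g x -> continuity_pt (fun y => f y * g y) x.
Proof. intros; exact (continuity_pt_mult f g x H H0). Qed.
Lemma cp_plus f g x : continuity_pt f x -> continuity_pt g x -> continuity_pt (fun y => f y + g y) x.
Proof. intros; exact (continuity_pt_plus f g x H H0). Qed.
Lemma cp_minus f g x : continuity_pt f x -> continuity_pt g x -> continuity_pt (fun y => f y - g y) x.
Proof. intros; exact (continuity_pt_minus f g x H H0). Qed.
Lemma cp_div f g x : continuity_pt f x -> continuity_pt g x -> g x <> 0 -> continuity_pt (fun y => f y / g y) x.
Proof. intros; exact (continuity_pt_div f g x H H0 H1). Qed.
Lemma cp_const c x : continuity_pt (fun _ => c) x.
Proof. apply continuity_pt_const. intros a b; reflexivity. Qed.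
Lemma cp_exp f x : continuity_pt f x -> continuity_pt (fun y => exp (f y)) x.
Proof. intros H. apply (continuity_pt_comp f exp x H). apply derivable_continuous_pt, derivable_pt_exp. Qed.
Lemma cp_pow f n x : continuity_pt f x -> continuity_pt (fun y => f y ^ n) x.
Proof. intros H. induction n; simpl. apply cp_const. apply cp_mult; auto. Qed.

Lemma dl_eq f x l l' : derivable_pt_lim f x l -> l = l' -> derivable_pt_lim f x l'.
Proof. intros H ->; auto. Qed.
Lemma dl_mult f g x a b : derivable_pt_lim f x a -> derivable_pt_lim g x b ->
  derivable_pt_lim (fun y => f y * g y) x (a * g x + f x * b).
Proof. intros; exact (derivable_pt_lim_mult f g x a b H H0). Qed.
Lemma dl_plus f g x a b : derivable_pt_lim f x a -> derivable_pt_lim g x b ->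
  derivable_pt_lim (fun y => f y + g y) x (a + b).
Proof. intros; exact (derivable_pt_lim_plus f g x a b H H0). Qed.
Lemma dl_minus f g x a b : derivable_pt_lim f x a -> derivable_pt_lim g x b ->
  derivable_pt_lim (fun y => f y - g y) x (a - b).
Proof. intros; exact (derivable_pt_lim_minus f g x a b H H0). Qed.
Lemma dl_const c x : derivable_pt_lim (fun _ => c) x 0.
Proof. exact (derivable_pt_lim_const c x). Qed.
Lemma dl_id x : derivable_pt_lim (fun y => y) x 1.
Proof. exact (derivable_pt_lim_id x). Qed.
Lemma dl_exp f x a : derivable_pt_lim f x a -> derivable_pt_lim (fun y => exp (f y)) x (exp (f x) * a).
Proof. intros H. exact (derivable_pt_lim_comp f exp x a (exp (f x)) H (derivable_pt_lim_exp (f x))). Qed.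

Lemma mvt_cl f df a b : -1 <= a -> a < b -> b <= 0 ->
  (forall x, continuity_pt (fun y => f (clamp y)) x) ->
  (forall x, a < x < b -> derivable_pt_lim f x (df x)) ->
  exists c, a <= c <= b /\ f b - f a = df c * (b - a).
Proof.
  intros Ha Hab Hb Hc Hd.
  destruct (MVT_gen (fun y => f (clamp y)) a b df) as [c [Hc1 Hc2]]; cbv zeta in *.
  - rewrite Rmin_left, Rmax_right by lra. intros x Hx.
    apply is_derive_ext_loc with f.
    + assert (Hp : 0 < Rmin (x - a) (b - x)) by (apply Rmin_pos; lra).
      exists (mkposreal _ Hp). intros y Hy. simpl in Hy.
      unfold ball in Hy; simpl in Hy; unfold AbsRing_ball, abs, minus, plus, opp in Hy; simpl in Hy.
      pose proof (Rmin_l (x-a) (b-x)); pose proof (Rmin_r (x-a) (b-x)).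
      rewrite clamp_id; auto. unfold Rabs in Hy; destruct Rcase_abs; lra.
    + apply is_derive_Reals, Hd; lra.
  - intros; apply Hc.
  - rewrite Rmin_left, Rmax_right in Hc1 by lra. exists c; split; auto.
    rewrite !clamp_id in Hc2 by lra. exact Hc2.
Qed.

Lemma gronwall D dD K c p : 0 < K -> 0 <= c -> -1 <= p <= 0 ->
  (forall x, continuity_pt (fun y => D (clamp y)) x) ->
  (forall x, -1 < x < 0 -> derivable_pt_lim D x (dD x)) ->
  (forall x, -1 <= x <= 0 -> dD x <= K * D x + c) ->
  D p <= exp (K*(p+1)) * (D (-1) + c/K) - c/K.
Proof.
  intros HK Hc Hp HDc HDd Hineq.
  destruct (Req_dec p (-1)) as [->|Hne].
  { replace (K*(-1+1)) with 0 by ring. rewrite exp_0. lra. }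
  set (G := fun y => exp ((-K)*(y+1)) * (D y + c/K)).
  destruct (mvt_cl G (fun y => exp((-K)*(y+1)) * (dD y - K*(D y + c/K))) (-1) p) as [z [Hz HG]]; try lra.
  - intros x. unfold G. apply cp_mult.
    + apply cp_exp. apply cp_mult. apply cp_const. apply cp_plus. apply cp_clamp. apply cp_const.
    + apply cp_plus. apply HDc. apply cp_const.
  - intros x Hx. unfold G.
    eapply dl_eq. apply dl_mult. apply dl_exp. apply dl_mult. apply dl_const. apply dl_plus. apply dl_id. apply dl_const.
    apply dl_plus. apply HDd; lra. apply dl_const. cbv beta. ring.
  - unfold G in HG.
    assert (H1 := Hineq z ltac:(lra)).
    assert (H2 : 0 < exp ((-K)*(z+1))) by apply exp_pos.
    assert (H3 : exp ((-K)*(z+1)) * (dD z - K*(D z + c/K)) <= 0).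
    { assert (dD z - K*(D z + c/K) <= 0) by (replace (K*(D z + c/K)) with (K * D z + c) by (field; lra); lra). nra. }
    replace ((-K)*(-1+1)) with 0 in HG by ring. rewrite exp_0 in HG.
    assert (H4 : exp ((-K)*(p+1)) * (D p + c/K) <= D (-1) + c/K) by nra.
    assert (H5 : exp (K*(p+1)) * exp ((-K)*(p+1)) = 1).
    { rewrite <- exp_plus. replace (K*(p+1) + (-K)*(p+1)) with 0 by ring. apply exp_0. }
    assert (H6 : 0 < exp (K*(p+1))) by apply exp_pos.
    assert (H7 : D p + c/K <= exp (K*(p+1)) * (D (-1) + c/K)).
    { replace (D p + c/K) with (exp (K*(p+1)) * (exp ((-K)*(p+1)) * (D p + c/K))) by
        (rewrite <- Rmult_assoc, H5; ring).
      apply Rmult_le_compat_l; lra. }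
    lra.
Qed.

Record Sys (h r : R -> R) (w F : R -> R -> R) : Prop := {
  s_h_pos : forall p, -1<=p<=0 -> 0 < h p;
  s_r_nonpos : forall p, -1<=p<=0 -> r p <= 0;
  s_h_cont : forall x, continuity_pt (fun y => h (clamp y)) x;
  s_r_cont : forall x, continuity_pt (fun y => r (clamp y)) x;
  s_w_cont : forall mu, 0<=mu -> forall x, continuity_pt (fun y => w mu (clamp y)) x;
  s_F_cont : forall mu, 0<=mu -> forall x, continuity_pt (fun y => F mu (clamp y)) x;
  s_w_der : forall mu, 0<=mu -> forall x, -1<x<0 -> derivable_pt_lim (w mu) x (h x * F mu x);
  s_F_der : forall mu, 0<=mu -> forall x, -1<x<0 -> derivable_pt_lim (F mu) x (mu * r x * w mu x);
  s_w_init : forall mu, 0<=mu -> w mu (-1) = 0;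
  s_F_init : forall mu, 0<=mu -> F mu (-1) = 1 / h (-1) }.

Section Abs.
End Abs.

Lemma F_zero h r w F : Sys h r w F -> forall p, -1 <= p <= 0 -> F 0 p = 1 / h (-1).
Proof.
  intros S p Hp. destruct (Req_dec p (-1)) as [->|Hne]. { apply (s_F_init _ _ _ _ S); lra. }
  destruct (mvt_cl (F 0) (fun x => 0 * r x * w 0 x) (-1) p) as [c [Hc E]]; try lra.
  - apply (s_F_cont _ _ _ _ S); lra.
  - intros; apply (s_F_der _ _ _ _ S); lra.
  - rewrite (s_F_init _ _ _ _ S) in E by lra. lra.
Qed.

Lemma F_nonneg_mono h r w F mu : Sys h r w F -> 0 <= mu ->
  (forall p, -1 <= p <= 0 -> 0 <= F mu p) ->
  (forall p, -1 <= p <= 0 -> 0 <= w mu p) /\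
  (forall a b, -1 <= a <= b -> b <= 0 -> F mu b <= F mu a).
Proof.
  intros S Hmu HF.
  assert (Hw : forall p, -1 <= p <= 0 -> 0 <= w mu p).
  { intros p Hp. destruct (Req_dec p (-1)) as [->|Hne]. { rewrite (s_w_init _ _ _ _ S); lra. }
    destruct (mvt_cl (w mu) (fun x => h x * F mu x) (-1) p) as [c [Hc E]]; try lra.
    - apply (s_w_cont _ _ _ _ S); lra.
    - intros; apply (s_w_der _ _ _ _ S); lra.
    - rewrite (s_w_init _ _ _ _ S) in E by lra.
      assert (0 < h c) by (apply (s_h_pos _ _ _ _ S); lra).
      assert (0 <= F mu c) by (apply HF; lra).
      assert (0 <= h c * F mu c) by nra. nra. }
  split; auto. intros a b Hab Hb.
  destruct (Req_dec a b) as [->|Hne]; [lra|].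
  destruct (mvt_cl (F mu) (fun x => mu * r x * w mu x) a b) as [c [Hc E]]; try lra.
  - apply (s_F_cont _ _ _ _ S); lra.
  - intros; apply (s_F_der _ _ _ _ S); lra.
  - assert (r c <= 0) by (apply (s_r_nonpos _ _ _ _ S); lra).
    assert (0 <= w mu c) by (apply Hw; lra).
    assert (mu * r c * w mu c <= 0).
    { assert (mu * r c <= 0) by nra. nra. }
    nra.
Qed.

Lemma w_pos_strict h r w F mu : Sys h r w F -> 0 <= mu ->
  (forall p, -1 <= p <= 0 -> 0 < F mu p) -> forall p, -1 < p <= 0 -> 0 < w mu p.
Proof.
  intros S Hmu HF p Hp.
  destruct (mvt_cl (w mu) (fun x => h x * F mu x) (-1) p) as [c [Hc E]]; try lra.
  - apply (s_w_cont _ _ _ _ S); lra.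
  - intros; apply (s_w_der _ _ _ _ S); lra.
  - rewrite (s_w_init _ _ _ _ S) in E by lra.
    assert (0 < h c) by (apply (s_h_pos _ _ _ _ S); lra).
    assert (0 < F mu c) by (apply HF; lra).
    assert (0 < h c * F mu c) by nra. nra.
Qed.

Lemma w0_pos h r w F mu : Sys h r w F -> 0 <= mu ->
  (forall p, -1 <= p <= 0 -> 0 <= F mu p) -> 0 < w mu 0.
Proof.
  intros S Hmu HF.
  destruct (F_nonneg_mono h r w F mu S Hmu HF) as [Hw Hmono].
  assert (Hh1 : 0 < h (-1)) by (apply (s_h_pos _ _ _ _ S); lra).
  assert (HF1 : F mu (-1) = 1 / h (-1)) by (apply (s_F_init _ _ _ _ S); lra).
  assert (HF1p : 0 < F mu (-1)) by (rewrite HF1; apply Rdiv_lt_0_compat; lra).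
  destruct (cp_epsdelta _ _ (s_F_cont _ _ _ _ S mu Hmu (-1)) (F mu (-1) / 2)) as [d [Hd K]]; [lra|].
  rewrite clamp_id in K by lra.
  set (p0 := -1 + Rmin d 1 / 2).
  assert (Hm : 0 < Rmin d 1) by (apply Rmin_pos; lra).
  assert (Hm1 : Rmin d 1 <= d) by apply Rmin_l. assert (Hm2 : Rmin d 1 <= 1) by apply Rmin_r.
  assert (Hp0 : -1 < p0 <= -1/2) by (unfold p0; lra).
  assert (Hwp0 : 0 < w mu p0).
  { destruct (mvt_cl (w mu) (fun x => h x * F mu x) (-1) p0) as [c [Hc E]]; try lra.
    - apply (s_w_cont _ _ _ _ S); lra.
    - intros; apply (s_w_der _ _ _ _ S); lra.
    - rewrite (s_w_init _ _ _ _ S) in E by lra.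
      assert (0 < h c) by (apply (s_h_pos _ _ _ _ S); lra).
      assert (0 < F mu c).
      { specialize (K c). rewrite clamp_id in K by lra.
        assert (Rabs (c - -1) < d) by (rewrite Rabs_right; unfold p0 in Hc; lra).
        specialize (K H0). revert K. unfold Rabs; destruct Rcase_abs; lra. }
      assert (0 < h c * F mu c) by nra. nra. }
  destruct (mvt_cl (w mu) (fun x => h x * F mu x) p0 0) as [c [Hc E]]; try lra.
  - apply (s_w_cont _ _ _ _ S); lra.
  - intros; apply (s_w_der _ _ _ _ S); lra.
  - assert (0 < h c) by (apply (s_h_pos _ _ _ _ S); lra).
    assert (0 <= F mu c) by (apply HF; lra).
    assert (0 <= h c * F mu c) by nra. nra.
Qed.

Lemma exp_mono x y : x <= y -> exp x <= exp y.
Proof. intros H. destruct (Rle_lt_or_eq_dec _ _ H) as [H1|H1]; [left; apply exp_increasing; auto| rewrite H1; lra]. Qed.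

Lemma bound_w h r w F M Hmax Rmax : Sys h r w F -> 0 <= M -> 0 <= Rmax ->
  (forall p, -1 <= p <= 0 -> h p <= Hmax) -> (forall p, -1 <= p <= 0 -> - r p <= Rmax) ->
  forall mu, 0 <= mu <= M -> forall p, -1 <= p <= 0 ->
  w mu p * w mu p + F mu p * F mu p <= exp (Hmax + M*Rmax + 1) * ((1/h(-1)) * (1/h(-1))).
Proof.
  intros S HM HR Hh Hr mu Hmu p Hp.
  assert (Hh1 : 0 < h (-1)) by (apply (s_h_pos _ _ _ _ S); lra).
  assert (HH : 0 < Hmax) by (pose proof (Hh (-1) ltac:(lra)); lra).
  set (K := Hmax + M*Rmax + 1).
  assert (HK : 0 < K) by (unfold K; nra).
  pose proof (gronwall (fun y => w mu y * w mu y + F mu y * F mu y)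
     (fun y => 2*w mu y*(h y * F mu y) + 2*F mu y*(mu*r y*w mu y)) K 0 p HK ltac:(lra) Hp) as G.
  cbv beta in G.
  rewrite (s_w_init _ _ _ _ S), (s_F_init _ _ _ _ S) in G by lra.
  assert (E : exp (K*(p+1)) <= exp K) by (apply exp_mono; nra).
  assert (Hq : 0 <= (1/h(-1)) * (1/h(-1))) by nra.
  assert (G' : w mu p * w mu p + F mu p * F mu p <= exp (K*(p+1)) * ((1/h(-1)) * (1/h(-1)))).
  { replace (exp (K * (p + 1)) * (1 / h (-1) * (1 / h (-1))))
      with (exp (K * (p + 1)) * (0 * 0 + 1 / h (-1) * (1 / h (-1)) + 0 / K) - 0 / K) by (field; lra).
    apply G.
    - intros x. apply cp_plus; apply cp_mult; try apply (s_w_cont _ _ _ _ S); try apply (s_F_cont _ _ _ _ S); lra.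
    - intros x Hx. eapply dl_eq. apply dl_plus; apply dl_mult.
      apply (s_w_der _ _ _ _ S); lra. apply (s_w_der _ _ _ _ S); lra.
      apply (s_F_der _ _ _ _ S); lra. apply (s_F_der _ _ _ _ S); lra. ring.
    - intros x Hx. set (a := w mu x). set (b := F mu x).
      assert (hx : 0 < h x) by (apply (s_h_pos _ _ _ _ S); lra).
      assert (hx2 := Hh x Hx). assert (rx := Hr x Hx).
      assert (rx2 : r x <= 0) by (apply (s_r_nonpos _ _ _ _ S); lra).
      assert (E1 : 2*a*b <= a*a+b*b) by (pose proof (Rle_0_sqr (a - b)); unfold Rsqr in *; nra).
      assert (E2 : -(2*a*b) <= a*a+b*b) by (pose proof (Rle_0_sqr (a + b)); unfold Rsqr in *; nra).
      assert (T1 : 2*a*(h x * b) <= Hmax * (a*a+b*b)) by nra.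
      assert (Hmr : mu * (- r x) <= M * Rmax) by nra.
      assert (T2 : 2*b*(mu * r x * a) <= M * Rmax * (a*a+b*b)).
      { replace (2*b*(mu * r x * a)) with ((mu * (- r x)) * (-(2*a*b))) by ring.
        assert (0 <= mu * (- r x)) by nra. nra. }
      unfold K. nra. }
  nra.
Qed.

Lemma lip_w h r w F M Hmax Rmax : Sys h r w F -> 0 <= M -> 0 <= Rmax ->
  (forall p, -1 <= p <= 0 -> h p <= Hmax) -> (forall p, -1 <= p <= 0 -> - r p <= Rmax) ->
  forall mu1 mu2, 0 <= mu1 <= M -> 0 <= mu2 <= M -> forall p, -1 <= p <= 0 ->
  (w mu1 p - w mu2 p) * (w mu1 p - w mu2 p) + (F mu1 p - F mu2 p) * (F mu1 p - F mu2 p) <=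
  exp (Hmax + M*Rmax + 1) * (Rmax * Rmax * (exp (Hmax + M*Rmax + 1) * ((1/h(-1)) * (1/h(-1)))) /
      (Hmax + M*Rmax + 1)) * ((mu1 - mu2) * (mu1 - mu2)).
Proof.
  intros S HM HR Hh Hr mu1 mu2 Hmu1 Hmu2 p Hp.
  assert (Hh1 : 0 < h (-1)) by (apply (s_h_pos _ _ _ _ S); lra).
  assert (HH : 0 < Hmax) by (pose proof (Hh (-1) ltac:(lra)); lra).
  set (B2 := exp (Hmax + M*Rmax + 1) * ((1/h(-1)) * (1/h(-1)))).
  assert (HB := bound_w h r w F M Hmax Rmax S HM HR Hh Hr mu2 Hmu2). fold B2 in HB.
  set (K := Hmax + M*Rmax + 1).
  assert (HK : 0 < K) by (unfold K; nra).
  set (d := mu1 - mu2).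
  set (c := Rmax * Rmax * B2 * (d * d)).
  assert (Hc : 0 <= c).
  { unfold c. assert (0 <= B2).
    { unfold B2. apply Rmult_le_pos. left; apply exp_pos. apply Rmult_le_pos; left; apply Rdiv_lt_0_compat; lra. }
    apply Rmult_le_pos. apply Rmult_le_pos; auto. apply Rmult_le_pos; auto. apply Rle_0_sqr. }
  pose proof (gronwall (fun y => (w mu1 y - w mu2 y) * (w mu1 y - w mu2 y) + (F mu1 y - F mu2 y) * (F mu1 y - F mu2 y))
     (fun y => 2*(w mu1 y - w mu2 y)*(h y * F mu1 y - h y * F mu2 y) +
               2*(F mu1 y - F mu2 y)*(mu1*r y*w mu1 y - mu2 * r y * w mu2 y)) K c p HK Hc Hp) as G.
  cbv beta in G.
  rewrite (s_w_init _ _ _ _ S mu1), (s_w_init _ _ _ _ S mu2), (s_F_init _ _ _ _ S mu1), (s_F_init _ _ _ _ S mu2) in G by lra.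
  assert (E : exp (K*(p+1)) <= exp K) by (apply exp_mono; nra).
  assert (G' : (w mu1 p - w mu2 p) * (w mu1 p - w mu2 p) + (F mu1 p - F mu2 p) * (F mu1 p - F mu2 p)
     <= exp (K*(p+1)) * (c / K)).
  { assert (Hx : exp (K*(p+1)) * (c / K) =
      exp (K * (p + 1)) * ((0 - 0) * (0 - 0) + (1 / h (-1) - 1 / h (-1)) * (1 / h (-1) - 1 / h (-1)) + c / K) - c / K + c/K) by ring.
    assert (0 <= c / K) by (apply Rdiv_le_0_compat; lra).
    rewrite Hx. eapply Rle_trans. apply G. 4: lra.
    - intros x. apply cp_plus; apply cp_mult; apply cp_minus;
        try apply (s_w_cont _ _ _ _ S); try apply (s_F_cont _ _ _ _ S); lra.
    - intros x Hx'. eapply dl_eq. apply dl_plus; apply dl_mult; apply dl_minus;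
        try (apply (s_w_der _ _ _ _ S); lra); try (apply (s_F_der _ _ _ _ S); lra). cbv beta; ring.
    - intros x Hx'. set (a := w mu1 x - w mu2 x). set (b := F mu1 x - F mu2 x).
      assert (hx : 0 < h x) by (apply (s_h_pos _ _ _ _ S); lra).
      assert (hx2 := Hh x Hx'). assert (rx := Hr x Hx').
      assert (rx2 : r x <= 0) by (apply (s_r_nonpos _ _ _ _ S); lra).
      assert (Hw2 : w mu2 x * w mu2 x <= B2).
      { pose proof (HB x Hx'). nra. }
      assert (E1 : 2*a*b <= a*a+b*b) by (pose proof (Rle_0_sqr (a - b)); unfold Rsqr in *; nra).
      assert (E2 : -(2*a*b) <= a*a+b*b) by (pose proof (Rle_0_sqr (a + b)); unfold Rsqr in *; nra).
      assert (T1 : 2*a*(h x * F mu1 x - h x * F mu2 x) <= Hmax * (a*a+b*b)).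
      { replace (2*a*(h x * F mu1 x - h x * F mu2 x)) with (h x * (2*a*b)) by (unfold b; ring). nra. }
      assert (Hmr : mu1 * (- r x) <= M * Rmax) by nra.
      assert (T2 : 2*b*(mu1 * r x * a) <= M * Rmax * (a*a+b*b)).
      { replace (2*b*(mu1 * r x * a)) with ((mu1 * (- r x)) * (-(2*a*b))) by ring.
        assert (0 <= mu1 * (- r x)) by nra. nra. }
      set (z := r x * d * w mu2 x).
      assert (T3 : 2*b*z <= b*b + z*z) by (pose proof (Rle_0_sqr (b - z)); unfold Rsqr in *; nra).
      assert (Hz : z * z <= Rmax * Rmax * B2 * (d*d)).
      { unfold z. replace (r x * d * w mu2 x * (r x * d * w mu2 x)) with ((r x * r x) * (w mu2 x * w mu2 x) * (d*d)) by ring.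
        assert (r x * r x <= Rmax * Rmax) by nra.
        assert (0 <= d*d) by nra. assert (0 <= w mu2 x * w mu2 x) by nra.
        apply Rmult_le_compat_r; auto. apply Rmult_le_compat; nra. }
      replace (2 * a * (h x * F mu1 x - h x * F mu2 x) + 2 * b * (mu1 * r x * w mu1 x - mu2 * r x * w mu2 x))
        with (2 * a * (h x * F mu1 x - h x * F mu2 x) + 2*b*(mu1 * r x * a) + 2*b*z) by (unfold a, z, d; ring).
      unfold K, c. nra. }
  assert (0 <= c / K) by (apply Rdiv_le_0_compat; lra).
  assert (exp (K*(p+1)) * (c/K) <= exp K * (c/K)) by nra.
  assert (exp K * (c/K) = exp K * (Rmax * Rmax * B2 / K) * (d * d)) by (unfold c; field; lra).
  lra.
Qed.

Lemma sq_lin L a d : 0 <= L -> a * a <= L * (d * d) -> Rabs a <= (L+1) * Rabs d.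
Proof.
  intros HL H. destruct (Rle_dec (Rabs a) ((L+1) * Rabs d)) as [|Hn]; auto. exfalso.
  apply Rnot_le_lt in Hn. pose proof (Rabs_pos d).
  assert (Ha : a * a = Rabs a * Rabs a) by (rewrite <- Rabs_mult, Rabs_right; [reflexivity| pose proof (Rle_0_sqr a); unfold Rsqr in *; lra]).
  assert (Hd : d * d = Rabs d * Rabs d) by (rewrite <- Rabs_mult, Rabs_right; [reflexivity| pose proof (Rle_0_sqr d); unfold Rsqr in *; lra]).
  rewrite Ha, Hd in H. pose proof (Rabs_pos a).
  assert (0 <= (L+1) * Rabs d) by nra.
  assert (Rabs a * Rabs a > ((L+1) * Rabs d) * ((L+1) * Rabs d)) by nra.
  assert (0 <= Rabs d * Rabs d) by nra.
  nra.
Qed.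

Lemma small2 S T X e : 0<=S -> 0<=T -> 0<X -> 0<e -> e <= X/(2*(S+T+1)) -> S*e < X/2 /\ T*e < X/2.
Proof.
  intros HS HT HX He Hle.
  assert (Hd : 0 < 2*(S+T+1)) by lra.
  apply (Rmult_le_compat_r (2*(S+T+1))) in Hle; [|lra].
  replace (X/(2*(S+T+1))*(2*(S+T+1))) with X in Hle by (field; lra).
  split; nra.
Qed.

Definition Aab (F w : R -> R -> R) rho0 mu := - F mu 0 + mu * rho0 * w mu 0.

Lemma A_lip_gen rho0 M S Bw m1 m2 a b c : 0 < rho0 -> 0 <= m1 <= M -> 0 <= S ->
  Rabs a <= S * Rabs (m1 - m2) -> Rabs b <= S * Rabs (m1 - m2) -> Rabs c <= Bw ->
  Rabs (- a + rho0 * (m1 * b + (m1 - m2) * c)) <= (S + rho0*(M*S + Bw)) * Rabs (m1 - m2).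
Proof.
  intros Hr Hm HS Ha Hb Hc.
  eapply Rle_trans. apply Rabs_triang. rewrite Rabs_Ropp, Rabs_mult, (Rabs_pos_eq rho0) by lra.
  assert (Rabs (m1 * b + (m1 - m2) * c) <= M * (S * Rabs (m1-m2)) + Rabs (m1 - m2) * Bw).
  { eapply Rle_trans. apply Rabs_triang. rewrite !Rabs_mult, (Rabs_pos_eq m1) by lra.
    pose proof (Rabs_pos b). pose proof (Rabs_pos (m1 - m2)). pose proof (Rabs_pos c).
    apply Rplus_le_compat. apply Rmult_le_compat; lra. apply Rmult_le_compat_l; lra. }
  pose proof (Rabs_pos (m1 - m2)). nra.
Qed.

Lemma notgood_big h r w F rho0 hmin mu : Sys h r w F -> 0 < rho0 -> 0 < hmin ->
  (forall p, -1 <= p <= 0 -> hmin <= h p) -> mu = 1/(rho0*hmin) ->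
  Aab F w rho0 mu < 0 -> (forall p, -1 <= p <= 0 -> 0 < F mu p) -> False.
Proof.
  intros S Hr Hm Hh Hmu HA HF.
  assert (Hmu0 : 0 <= mu) by (rewrite Hmu; left; apply Rdiv_lt_0_compat; nra).
  destruct (F_nonneg_mono h r w F mu S Hmu0 (fun p Hp => Rlt_le _ _ (HF p Hp))) as [Hw Hmono].
  set (F0 := F mu 0).
  destruct (mvt_cl (fun y => w mu y - hmin * F0 * y) (fun x => h x * F mu x - hmin * F0 * 1) (-1) 0) as [c [Hc E]]; try lra.
  - intros x. apply cp_minus. apply (s_w_cont _ _ _ _ S); lra. apply cp_mult. apply cp_const. apply cp_clamp.
  - intros x Hx. eapply dl_eq. apply dl_minus. apply (s_w_der _ _ _ _ S); lra. apply dl_mult. apply dl_const. apply dl_id.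
    cbv beta; ring.
  - rewrite (s_w_init _ _ _ _ S) in E by lra.
    assert (H1 : hmin <= h c) by (apply Hh; lra).
    assert (H2 : F0 <= F mu c) by (apply Hmono; lra).
    assert (H3 : 0 < F0) by (apply HF; lra).
    assert (H4 : hmin * F0 <= h c * F mu c) by (apply Rmult_le_compat; lra).
    assert (H5 : hmin * F0 <= w mu 0) by lra.
    unfold Aab in HA. fold F0 in HA.
    assert (H6 : mu * rho0 * hmin = 1) by (rewrite Hmu; field; lra).
    assert (H7 : mu * rho0 * (hmin * F0) <= mu * rho0 * w mu 0).
    { apply Rmult_le_compat_l; auto. nra. }
    nra.
Qed.

Lemma abstract_main h r w F rho0 : Sys h r w F -> 0 < rho0 ->
  exists mucr, 0 < mucr /\ Aab F w rho0 mucr = 0 /\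
   (forall mu, 0 <= mu <= mucr -> (forall p, -1 < p <= 0 -> 0 < w mu p) /\
                                (forall p, -1 <= p <= 0 -> 0 < F mu p)) /\
   (forall mu, 0 <= mu < mucr -> Aab F w rho0 mu < 0).
Proof.
  intros S Hrho.
  destruct (continuity_ab_maj (fun y => h (clamp y)) (-1) 0 ltac:(lra) (fun c _ => s_h_cont _ _ _ _ S c))
    as [xM [HxM HxM']].
  set (Hmax := h (clamp xM)) in *.
  assert (Hhmax : forall p, -1 <= p <= 0 -> h p <= Hmax).
  { intros p Hp. specialize (HxM p Hp). rewrite clamp_id in HxM; auto. }
  destruct (continuity_ab_min (fun y => h (clamp y)) (-1) 0 ltac:(lra) (fun c _ => s_h_cont _ _ _ _ S c))
    as [xm [Hxm Hxm']].
  set (hmin := h (clamp xm)) in *.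
  assert (Hhmin : forall p, -1 <= p <= 0 -> hmin <= h p).
  { intros p Hp. specialize (Hxm p Hp). rewrite clamp_id in Hxm; auto. }
  assert (Hhmin0 : 0 < hmin) by (unfold hmin; apply (s_h_pos _ _ _ _ S); apply clamp_in).
  destruct (continuity_ab_maj (fun y => 0 - r (clamp y)) (-1) 0 ltac:(lra)
     (fun c _ => cp_minus _ _ c (cp_const 0 c) (s_r_cont _ _ _ _ S c))) as [xR [HxR HxR']].
  set (Rmax := 0 - r (clamp xR)) in *.
  assert (Hrmax : forall p, -1 <= p <= 0 -> - r p <= Rmax).
  { intros p Hp. specialize (HxR p Hp). rewrite clamp_id in HxR; auto. lra. }
  assert (HR0 : 0 <= Rmax) by (unfold Rmax; pose proof (s_r_nonpos _ _ _ _ S (clamp xR) (clamp_in xR)); lra).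
  assert (Hh1 : 0 < h (-1)) by (apply (s_h_pos _ _ _ _ S); lra).
  set (F00 := 1 / h (-1)).
  assert (HF00 : 0 < F00) by (unfold F00; apply Rdiv_lt_0_compat; lra).
  set (mu0 := 1/(rho0*hmin)).
  assert (Hmu0 : 0 < mu0) by (unfold mu0; apply Rdiv_lt_0_compat; nra).
  set (M := mu0 + 1).
  assert (HM : 0 <= M) by (unfold M; lra).
  set (K := Hmax + M*Rmax + 1).
  set (B2 := exp K * (F00 * F00)).
  set (Lc := exp K * (Rmax * Rmax * B2 / K)).
  assert (HHmax : 0 < Hmax) by (pose proof (Hhmax (-1) ltac:(lra)); lra).
  assert (HK : 0 < K) by (unfold K; nra).
  assert (HB2 : 0 <= B2) by (unfold B2; pose proof (exp_pos K); nra).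
  assert (HLc : 0 <= Lc).
  { unfold Lc. apply Rmult_le_pos. left; apply exp_pos. apply Rdiv_le_0_compat; [|lra].
    apply Rmult_le_pos; auto. nra. }
  set (Sc := Lc + 1).
  set (Bw := B2 + 1).
  set (CA := Sc + rho0 * (M * Sc + Bw)).
  assert (HSc : 0 <= Sc) by (unfold Sc; lra).
  assert (HCA : 0 <= CA).
  { unfold CA. assert (0 <= M*Sc) by nra. unfold Bw. nra. }
  assert (WB : forall mu, 0 <= mu <= M -> forall p, -1 <= p <= 0 -> Rabs (w mu p) <= Bw).
  { intros mu Hmu p Hp. pose proof (bound_w h r w F M Hmax Rmax S HM HR0 Hhmax Hrmax mu Hmu p Hp) as Hb.
    fold K F00 B2 in Hb. replace Bw with ((B2 + 1) * Rabs 1) by (rewrite Rabs_R1; unfold Bw; ring).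
    apply sq_lin; auto. assert (0 <= F mu p * F mu p) by nra. nra. }
  assert (LIP : forall mu1 mu2, 0 <= mu1 <= M -> 0 <= mu2 <= M -> forall p, -1 <= p <= 0 ->
     Rabs (w mu1 p - w mu2 p) <= Sc * Rabs (mu1 - mu2) /\ Rabs (F mu1 p - F mu2 p) <= Sc * Rabs (mu1 - mu2)).
  { intros mu1 mu2 H1 H2 p Hp.
    pose proof (lip_w h r w F M Hmax Rmax S HM HR0 Hhmax Hrmax mu1 mu2 H1 H2 p Hp) as Hl.
    fold K F00 B2 Lc in Hl.
    pose proof (Rle_0_sqr (w mu1 p - w mu2 p)). pose proof (Rle_0_sqr (F mu1 p - F mu2 p)). unfold Rsqr in *.
    split; apply sq_lin; auto; lra. }
  assert (FL : forall mu1 mu2, 0 <= mu1 <= M -> 0 <= mu2 <= M -> forall p, -1 <= p <= 0 ->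
     Rabs (F mu1 p - F mu2 p) <= Sc * Rabs (mu1 - mu2)) by (intros; apply LIP; auto).
  assert (AL : forall mu1 mu2, 0 <= mu1 <= M -> 0 <= mu2 <= M ->
     Rabs (Aab F w rho0 mu1 - Aab F w rho0 mu2) <= CA * Rabs (mu1 - mu2)).
  { intros mu1 mu2 H1 H2. unfold Aab, CA.
    replace (- F mu1 0 + mu1 * rho0 * w mu1 0 - (- F mu2 0 + mu2 * rho0 * w mu2 0)) with
      (- (F mu1 0 - F mu2 0) + rho0 * (mu1 * (w mu1 0 - w mu2 0) + (mu1 - mu2) * w mu2 0)) by ring.
    destruct (LIP mu1 mu2 H1 H2 0 ltac:(lra)).
    apply A_lip_gen; auto. apply WB; auto; lra. }

  set (good := fun mu => 0 <= mu /\ Aab F w rho0 mu < 0 /\ forall p, -1 <= p <= 0 -> 0 < F mu p).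
  assert (NG0 : ~ good mu0).
  { intros [_ [HA HF]]. apply (notgood_big h r w F rho0 hmin mu0 S Hrho Hhmin0 Hhmin eq_refl HA HF). }
  assert (F0p : forall p, -1 <= p <= 0 -> F 0 p = F00) by (intros; apply (F_zero h r w F S); auto).
  assert (A0 : Aab F w rho0 0 = - F00) by (unfold Aab; rewrite F0p by lra; ring).
  set (Lset := fun m => 0 <= m /\ forall mu, 0 <= mu <= m -> good mu).
  assert (Lbnd : forall m, Lset m -> m <= mu0).
  { intros m [Hm Hg]. destruct (Rle_dec m mu0) as [|Hn]; auto. exfalso. apply NG0. apply Hg. lra. }
  destruct (completeness Lset) as [mucr [Hub Hlub]].
  { exists mu0. intros m Hm. apply Lbnd; auto. }
  { exists 0. split; [lra|]. intros mu Hmu. assert (mu = 0) as -> by lra.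
    split; [lra|split]. rewrite A0; lra. intros p Hp. rewrite F0p; auto. }
  assert (Hmucr_le : mucr <= mu0) by (apply Hlub; intros m Hm; apply Lbnd; auto).
  set (eps := Rmin 1 (F00 / (2*(Sc + CA + 1)))).
  assert (Heps : 0 < eps) by (unfold eps; apply Rmin_pos; [lra| apply Rdiv_lt_0_compat; lra]).
  assert (Heps1 : eps <= 1) by apply Rmin_l.
  assert (Heps2 : eps <= F00 / (2*(Sc + CA + 1))) by apply Rmin_r.
  assert (Hsm := small2 Sc CA F00 eps HSc HCA HF00 Heps Heps2).
  assert (Leps : Lset eps).
  { split; [lra|]. intros mu Hmu. split; [lra|split].
    - destruct (Req_dec mu 0) as [->|Hne]; [rewrite A0; lra|].
      pose proof (AL mu 0 ltac:(unfold M; lra) ltac:(unfold M; lra)).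
      rewrite Rminus_0_r, (Rabs_pos_eq mu) in H by lra. rewrite A0 in H.
      assert (CA * mu <= CA * eps) by (apply Rmult_le_compat_l; lra).
      revert H. unfold Rabs; destruct Rcase_abs; lra.
    - intros p Hp. pose proof (FL mu 0 ltac:(unfold M; lra) ltac:(unfold M; lra) p Hp).
      rewrite Rminus_0_r, (Rabs_pos_eq mu), F0p in H by lra.
      assert (Sc * mu <= Sc * eps) by (apply Rmult_le_compat_l; lra).
      revert H. unfold Rabs; destruct Rcase_abs; lra. }
  assert (Hmucr_pos : 0 < mucr) by (pose proof (Hub eps Leps); lra).
  assert (Below : forall mu, 0 <= mu < mucr -> good mu).
  { intros mu Hmu. destruct (classic (good mu)) as [|Hn]; auto. exfalso.
    assert (mucr <= mu); [|lra]. apply Hlub. intros m [Hm Hg].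
    destruct (Rle_dec m mu) as [|Hn']; auto. exfalso. apply Hn, Hg. lra. }
  assert (HmM : mucr <= M) by (unfold M; lra).
  assert (Fge : forall p, -1 <= p <= 0 -> 0 <= F mucr p).
  { intros p Hp. destruct (Rle_dec 0 (F mucr p)) as [|Hn]; auto. exfalso. apply Rnot_le_lt in Hn.
    set (t := Rmin (mucr/2) ((- F mucr p) / (2*(Sc + 0 + 1)))).
    assert (Ht : 0 < t) by (unfold t; apply Rmin_pos; [lra| apply Rdiv_lt_0_compat; lra]).
    assert (Ht1 : t <= mucr/2) by apply Rmin_l.
    assert (Ht2 : t <= (- F mucr p) / (2*(Sc + 0 + 1))) by apply Rmin_r.
    destruct (small2 Sc 0 (- F mucr p) t HSc ltac:(lra) ltac:(lra) Ht Ht2) as [Hs _].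
    destruct (Below (mucr - t) ltac:(lra)) as [_ [_ HF]].
    pose proof (HF p Hp). pose proof (FL (mucr - t) mucr ltac:(lra) ltac:(lra) p Hp).
    replace (mucr - t - mucr) with (- t) in H0 by ring. rewrite Rabs_Ropp, (Rabs_pos_eq t) in H0 by lra.
    revert H0. unfold Rabs; destruct Rcase_abs; lra. }
  assert (Ale : Aab F w rho0 mucr <= 0).
  { destruct (Rle_dec (Aab F w rho0 mucr) 0) as [|Hn]; auto. exfalso. apply Rnot_le_lt in Hn.
    set (t := Rmin (mucr/2) ((Aab F w rho0 mucr) / (2*(CA + 0 + 1)))).
    assert (Ht : 0 < t) by (unfold t; apply Rmin_pos; [lra| apply Rdiv_lt_0_compat; lra]).
    assert (Ht1 : t <= mucr/2) by apply Rmin_l.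
    assert (Ht2 : t <= (Aab F w rho0 mucr) / (2*(CA + 0 + 1))) by apply Rmin_r.
    destruct (small2 CA 0 (Aab F w rho0 mucr) t HCA ltac:(lra) ltac:(lra) Ht Ht2) as [Hs _].
    destruct (Below (mucr - t) ltac:(lra)) as [_ [HA _]].
    pose proof (AL (mucr - t) mucr ltac:(lra) ltac:(lra)).
    replace (mucr - t - mucr) with (- t) in H by ring. rewrite Rabs_Ropp, (Rabs_pos_eq t) in H by lra.
    revert H. unfold Rabs; destruct Rcase_abs; lra. }
  assert (NGc : ~ good mucr).
  { intros [_ [HA HF]].
    destruct (continuity_ab_min (fun y => F mucr (clamp y)) (-1) 0 ltac:(lra)
      (fun c _ => s_F_cont _ _ _ _ S mucr ltac:(lra) c)) as [xf [Hxf Hxf']].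
    set (Fmin := F mucr (clamp xf)) in *.
    assert (HFmin : 0 < Fmin) by (apply HF, clamp_in).
    assert (HFm : forall p, -1 <= p <= 0 -> Fmin <= F mucr p).
    { intros p Hp. specialize (Hxf p Hp). rewrite clamp_id in Hxf; auto. }
    set (X := Rmin (- Aab F w rho0 mucr) Fmin).
    assert (HX : 0 < X) by (unfold X; apply Rmin_pos; lra).
    assert (HX1 : X <= - Aab F w rho0 mucr) by apply Rmin_l.
    assert (HX2 : X <= Fmin) by apply Rmin_r.
    set (e := Rmin 1 (X / (2*(Sc + CA + 1)))).
    assert (He : 0 < e) by (unfold e; apply Rmin_pos; [lra| apply Rdiv_lt_0_compat; lra]).
    assert (He1 : e <= 1) by apply Rmin_l.
    assert (He2 : e <= X / (2*(Sc + CA + 1))) by apply Rmin_r.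
    destruct (small2 Sc CA X e HSc HCA HX He He2) as [Hs1 Hs2].
    assert (Lset (mucr + e)).
    { split; [lra|]. intros mu Hmu. destruct (Rlt_le_dec mu mucr) as [Hlt|Hge].
      - apply Below; lra.
      - assert (HmuM : 0 <= mu <= M) by (unfold M; lra).
        split; [lra|split].
        + pose proof (AL mu mucr HmuM ltac:(lra)).
          rewrite (Rabs_pos_eq (mu - mucr)) in H by lra.
          assert (CA * (mu - mucr) <= CA * e) by (apply Rmult_le_compat_l; lra).
          revert H. unfold Rabs; destruct Rcase_abs; lra.
        + intros p Hp. pose proof (FL mu mucr HmuM ltac:(lra) p Hp). pose proof (HFm p Hp).
          rewrite (Rabs_pos_eq (mu - mucr)) in H by lra.
          assert (Sc * (mu - mucr) <= Sc * e) by (apply Rmult_le_compat_l; lra).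
          revert H. unfold Rabs; destruct Rcase_abs; lra. }
    pose proof (Hub _ H). lra. }
  assert (Fpos : forall p, -1 <= p <= 0 -> 0 < F mucr p).
  { intros p Hp. destruct (Rlt_dec 0 (F mucr p)) as [|Hn]; auto. exfalso.
    assert (HFq : F mucr p = 0) by (pose proof (Fge p Hp); lra).
    destruct (F_nonneg_mono h r w F mucr S ltac:(lra) Fge) as [_ Hmono].
    assert (HF0 : F mucr 0 = 0) by (pose proof (Hmono p 0 ltac:(lra) ltac:(lra)); pose proof (Fge 0 ltac:(lra)); lra).
    pose proof (w0_pos h r w F mucr S ltac:(lra) Fge).
    unfold Aab in Ale. rewrite HF0 in Ale.
    assert (0 < mucr * rho0 * w mucr 0) by (apply Rmult_lt_0_compat; nra). lra. }
  assert (A0c : Aab F w rho0 mucr = 0).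
  { destruct (Rlt_dec (Aab F w rho0 mucr) 0) as [Hl|Hn]; [|lra].
    exfalso. apply NGc. split; [lra|split; auto]. }
  exists mucr. split; [auto|split; [auto|split]].
  - intros mu Hmu. assert (HFp : forall p, -1 <= p <= 0 -> 0 < F mu p).
    { destruct (Req_dec mu mucr) as [->|Hne]; auto. apply Below; lra. }
    split; auto. apply (w_pos_strict h r w F mu S ltac:(lra) HFp).
  - intros mu Hmu. apply Below; auto.
Qed.

Lemma Ck_cont k alpha f fp : (1 < k)%nat -> Ckalpha k alpha (-1) 0 f ->
  (forall p, -1 <= p <= 0 -> deriv_within (-1) 0 f p (fp p)) ->
  forall x, continuity_pt (fun y => fp (clamp y)) x.
Proof.
  intros Hk [fs [H0 [Hd _]]] Hf. apply cw_clamp. intros x Hx.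
  assert (E : forall y, -1 <= y <= 0 -> fs 1%nat y = fp y).
  { intros y Hy. apply (dw_unique f y); auto.
    apply (dw_ext (fs 0%nat)); auto. apply Hd; auto; try lia. }
  apply (cw_ext (fs 1%nat)); auto. apply (dw_cw _ _ (fs 2%nat x)); [auto | apply Hd; auto; lia].
Qed.

Theorem lemma3p1 (alpha : R) (rho rhop H Hp : R -> R) (Phi Phip : R -> R -> R) :
  0 < alpha < 1 ->
  Ckalpha 2 alpha (-1) 0 rho ->
  Ckalpha 3 alpha (-1) 0 H ->
  (forall p, -1 <= p <= 0 -> deriv_within (-1) 0 rho p (rhop p)) ->
  (forall p, -1 <= p <= 0 -> deriv_within (-1) 0 H p (Hp p)) ->
  (forall p, -1 <= p <= 0 -> 0 < rho p) ->
  (forall p, -1 <= p <= 0 -> rhop p <= 0) ->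
  (forall p, -1 <= p <= 0 -> 0 < Hp p) ->
  (* Phi(.;mu) solves the initial value problem, Phip(.;mu) its p-derivative *)
  (forall mu, 0 <= mu ->
     ode_sol Hp rhop mu (fun p => Phi p mu) (fun p => Phip p mu) /\
     Phi (-1) mu = 0 /\ Phip (-1) mu = 1) ->
  exists! mucr, 0 < mucr /\
    (* (a) *)
    ((exists w wp, bvp_sol rho Hp rhop mucr w wp /\ nontrivial w) /\
     bvp_sol rho Hp rhop mucr (fun p => Phi p mucr) (fun p => Phip p mucr) /\
     nontrivial (fun p => Phi p mucr)) /\
    (* (b) *)
    (forall mu, 0 <= mu <= mucr ->
       (forall p, -1 < p <= 0 -> 0 < Phi p mu) /\
       (forall p, -1 <= p <= 0 -> 0 < Phip p mu)) /\
    (* (c) *)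
    (forall mu, 0 <= mu < mucr -> Afun rho Hp Phi Phip mu < 0).
Proof.
  intros Ha Crho CH Drho DH Hrho Hrhop HHp Hode.
  assert (HHp3 : forall p, -1 <= p <= 0 -> 0 < Hp p ^ 3) by (intros; apply pow_lt; auto).
  assert (S : Sys (fun p => Hp p ^ 3) rhop (fun mu p => Phi p mu) (fun mu p => Phip p mu / Hp p ^ 3)).
  { constructor.
    - exact HHp3.
    - exact Hrhop.
    - intros x. apply (cp_pow (fun y => Hp (clamp y)) 3 x). apply (Ck_cont 3 alpha H); auto.
    - intros x. apply (Ck_cont 2 alpha rho); auto.
    - intros mu Hmu x. apply (cw_clamp (fun p => Phi p mu)). intros y Hy.
      destruct (Hode mu Hmu) as [[O1 _] _]. eapply dw_cw; eauto.
    - intros mu Hmu x. apply (cp_div (fun y => Phip (clamp y) mu) (fun y => Hp (clamp y) ^ 3)).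
      + apply (cw_clamp (fun p => Phip p mu)). intros y Hy.
        destruct (Hode mu Hmu) as [[_ [O2 _]] _]. exact (O2 y Hy).
      + apply (cp_pow (fun y => Hp (clamp y)) 3 x). apply (Ck_cont 3 alpha H); auto.
      + pose proof (HHp3 (clamp x) (clamp_in x)). lra.
    - intros mu Hmu x Hx. destruct (Hode mu Hmu) as [[O1 _] _].
      eapply dl_eq. apply dw_interior; auto. apply O1; lra.
      cbv beta. pose proof (HHp x ltac:(lra)). field. lra.
    - intros mu Hmu x Hx. destruct (Hode mu Hmu) as [[_ [_ O3]] _].
      exact (da_derive _ _ _ (O3 x Hx)).
    - intros mu Hmu. destruct (Hode mu Hmu) as [_ [O _]]. exact O.
    - intros mu Hmu. destruct (Hode mu Hmu) as [_ [_ O]]. cbv beta. rewrite O. reflexivity. }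
  assert (Hr0 : 0 < rho 0) by (apply Hrho; lra).
  assert (AE : forall mu, Afun rho Hp Phi Phip mu =
     Aab (fun mu p => Phip p mu / Hp p ^ 3) (fun mu p => Phi p mu) (rho 0) mu).
  { intros mu. unfold Afun, Aab. pose proof (HHp 0 ltac:(lra)). field. lra. }
  destruct (abstract_main _ _ _ _ (rho 0) S Hr0) as [mucr [Hpos [HA [Hb Hc]]]].
  cbv beta in Hb.
  exists mucr. split.
  - split; auto. split; [|split].
    + assert (Hbvp : bvp_sol rho Hp rhop mucr (fun p => Phi p mucr) (fun p => Phip p mucr)).
      { destruct (Hode mucr ltac:(lra)) as [O [O1 _]]. split; auto. split; auto.
        change (Afun rho Hp Phi Phip mucr = 0). rewrite AE. exact HA. }
      assert (Hnt : nontrivial (fun p => Phi p mucr)).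
      { exists 0. split; [lra|]. destruct (Hb mucr ltac:(lra)) as [Hw _].
        pose proof (Hw 0 ltac:(lra)). lra. }
      split; [exists (fun p => Phi p mucr), (fun p => Phip p mucr)|]; auto.
    + intros mu Hmu. destruct (Hb mu Hmu) as [Hw HF]. split; auto.
      intros p Hp'. specialize (HF p Hp'). pose proof (HHp3 p Hp'). pose proof (HHp p Hp').
      replace (Phip p mu) with (Hp p ^ 3 * (Phip p mu / Hp p ^ 3)) by (field; lra).
      apply Rmult_lt_0_compat; auto.
    + intros mu Hmu. rewrite AE. apply Hc; auto.
  - intros m [Hm [[_ [Hbvp _]] [_ Hc']]].
    destruct Hbvp as [_ [_ Hz]].
    assert (Am : Afun rho Hp Phi Phip m = 0) by exact Hz.
    rewrite AE in Am.
    destruct (Rtotal_order mucr m) as [Hlt|[Heq|Hgt]]; auto.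
    + exfalso. specialize (Hc' mucr ltac:(lra)). rewrite AE in Hc'. lra.
    + exfalso. specialize (Hc m ltac:(lra)). lra.
Qed.
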